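(* Let $f$ be a DNF with $k$ terms and let $y\in\{0,1\}^n$ satisfy $f_{>\tau}$ and not $f_{\le\tau}$ ($\tau=1000k$). Fix any permutation $\pi$ and let $z_0,z_1,\dots$ be the sweep process started at $y$. Let $i$ be such that $(z_i)_a=y_a$ for all $a\in P(y)$, and let $U_i$ be the set of unanimous indices of $\mathcal{T}_f(z_i)$. Then $f(z_i^{\oplus j})=0$ for all $j\in U_i\setminus P(y)$.
   Context: Terms are sets of literals, a DNF is a set of terms; $g_{\le L}$ / $g_{>L}$ are the sub-DNFs of terms of length $\le L$ / $>L$. $\mathcal{T}_f(x)$ is the set of terms of $f$ satisfied by $x$. Protected set $P(y)$: for each term $T\in f$ not satisfied by $y$, take the literal of $T$ with smallest index not satisfied by $y$; $P(y)$ is the set of these indices. Unanimous indices of a set of terms $\mathcal{T}$: all $i$ such that every term of $\mathcal{T}$ contains $x_i$, or every term of $\mathcal{T}$ contains $\overline{x_i}$. $x^{\oplus j}$ is $x$ with bit $j$ flipped. Sweep process: given $y$ with $f(y)=1$ and a permutation $\pi$ listing $[n]$ as $\pi(0),\dots,\pi(n-1)$, $z_0=y$, and $z_{t+1}=z_t^{\oplus\pi(t)}$ if $f(z_t^{\oplus\pi(t)})=1$, else $z_{t+1}=z_t$. *)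

(* Defs.v *)
From mathcomp Require Import all_boot all_fingroup.
Set Implicit Arguments. Unset Strict Implicit. Unset Printing Implicit Defensive.

(* A literal over variables x_0..x_{n-1}: (i, true) is x_i, (i, false) is ~x_i. *)
Definition literal (n : nat) := ('I_n * bool)%type.
Definition term (n : nat) := {set literal n}.
Definition dnf (n : nat) := {set term n}.
Definition point (n : nat) := {ffun 'I_n -> bool}.

Section Defs.
Variable n : nat.
Implicit Types (f : dnf n) (T : term n) (x y : point n) (l : literal n).

Definition lit_sat x l : bool := x l.1 == l.2.
Definition term_sat x T : bool := [forall l in T, lit_sat x l].
Definition dnf_eval f x : bool := [exists T in f, term_sat x T].

Definition dnf_le f (L : nat) : dnf n := [set T in f | #|T| <= L].
Definition dnf_gt f (L : nat) : dnf n := [set T in f | L < #|T|].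

Definition sat_terms f x : {set term n} := [set T in f | term_sat x T].

Definition protected f y : {set 'I_n} :=
  [set a : 'I_n | [exists T in f,
     [&& ~~ term_sat y T,
         [exists b : bool, ((a, b) \in T) && ~~ lit_sat y (a, b)] &
         [forall l in T, ~~ lit_sat y l ==> (a <= l.1)]]]].

Definition unanimous (Ts : {set term n}) : {set 'I_n} :=
  [set i : 'I_n | [forall T in Ts, (i, true) \in T]
               || [forall T in Ts, (i, false) \in T]].

Definition flip x (j : 'I_n) : point n :=
  [ffun a => if a == j then ~~ x a else x a].

(* Sweep process: z_0 = y, z_{t+1} = z_t^{(+) pi(t)} if f accepts it, else z_t
   (for t < n; the process has states z_0, ..., z_n, and we keep it
   constant afterwards). *)
Fixpoint sweep f (pi : {perm 'I_n}) y (t : nat) : point n :=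
  match t with
  | 0 => y
  | t'.+1 =>
      let z := sweep f pi y t' in
      match insub t' : option 'I_n with
      | Some s => let z' := flip z (pi s) in if dnf_eval f z' then z' else z
      | None => z
      end
  end.
End Defs.

(* Main.v *)
Require Import Defs.
From mathcomp Require Import all_boot all_fingroup.

Lemma sweep_sat n (f : dnf n) pi (y : point n) t :
  dnf_eval f y -> dnf_eval f (sweep f pi y t).
Proof.
move=> Hy; elim: t => [|t IH] //=.
case: (insub t) => [s|] //=; by case: ifP.
Qed.

Lemma agree_sat n (f : dnf n) (x y : point n) (T : term n) :
  (forall a, a \in protected f y -> x a = y a) -> T \in f ->
  term_sat x T -> term_sat y T.
Proof.
move=> Hag HT Hx; apply/negPn/negP => Hy.
have: [exists l, (l \in T) && ~~ lit_sat y l].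
  apply: contraTT Hy => /existsPn H; rewrite negbK.
  apply/forallP => l; apply/implyP => lT; move: (H l); by rewrite lT /= negbK.
case/existsP => l0 Hl0.
pose P m := [exists l, [&& l \in T, ~~ lit_sat y l & (val l.1 == m)]].
have exP : exists m, P m by exists (val l0.1); apply/existsP; exists l0; by case/andP: Hl0 => -> ->; rewrite eqxx.
case: (ex_minnP exP) => m /existsP [l1 /and3P [l1T l1n /eqP l1m]] Hmin.
have Hprot : l1.1 \in protected f y.
  rewrite inE; apply/existsP; exists T; rewrite HT /=; apply/and3P; split => //.
    by apply/existsP; exists l1.2; rewrite -surjective_pairing l1T.
  apply/forallP => l; apply/implyP => lT; apply/implyP => ln.
  rewrite l1m; apply: Hmin; apply/existsP; exists l; by rewrite lT ln eqxx.
move: (Hag _ Hprot) => E.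
move/forallP: Hx => /(_ l1) /implyP /(_ l1T); rewrite /lit_sat E => H.
by move: l1n; rewrite /lit_sat H.
Qed.

Arguments agree_sat {n f x y T}.

Theorem lemma4p10 (n : nat) (f : dnf n) (k : nat) (y : point n) :
  #|f| = k ->
  dnf_eval (dnf_gt f (1000 * k)) y ->
  ~~ dnf_eval (dnf_le f (1000 * k)) y ->
  forall (pi : {perm 'I_n}) (i : nat), i <= n ->
  (forall a, a \in protected f y -> sweep f pi y i a = y a) ->
  forall j : 'I_n,
    j \in unanimous (sat_terms f (sweep f pi y i)) :\: protected f y ->
    ~~ dnf_eval f (flip (sweep f pi y i) j).
Proof.
move=> _ Hgt _ pi i _ Hag j.
set z := sweep f pi y i.
have Hfy : dnf_eval f y.
  case/existsP: Hgt => T /andP [HT HTs]; apply/existsP; exists T.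
  by move: HT; rewrite inE => /andP [-> _].
have Hfz : dnf_eval f z by apply: sweep_sat.
rewrite inE => /andP [jP jU].
have Hun : forall T, T \in sat_terms f z -> (j, z j) \in T.
  move=> T HT; move: jU; rewrite inE => /orP [] /forallP /(_ T) /implyP /(_ HT) Hl;
  move: HT; rewrite inE => /andP [_ /forallP /(_ (j, _)) /implyP /(_ Hl)];
  by rewrite /lit_sat /= => /eqP ->.
have Hyz : y j = z j.
  case/existsP: Hfz => T /andP [HT HTs].
  have HTz : T \in sat_terms f z by rewrite inE HT HTs.
  have := agree_sat Hag HT HTs => /forallP /(_ (j, z j)) /implyP /(_ (Hun _ HTz)).
  by rewrite /lit_sat /= => /eqP.
have Hag2 : forall a, a \in protected f y -> flip z j a = y a.
  move=> a Ha; rewrite /flip ffunE; case: eqP => [Eaj|_]; last exact: Hag.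
  by move: jP; rewrite -Eaj Ha.
apply/negP => /existsP [T' /andP [HT' HT's]].
have HT'y := agree_sat Hag2 HT' HT's.
have noj : forall c, (j, c) \in T' -> False.
  move=> c Hc.
  move/forallP: HT'y => /(_ (j, c)) /implyP /(_ Hc); rewrite /lit_sat /= => /eqP Ec.
  move/forallP: HT's => /(_ (j, c)) /implyP /(_ Hc); rewrite /lit_sat /= /flip ffunE eqxx.
  by rewrite -Ec Hyz; case: (z j).
have HT'z : term_sat z T'.
  apply/forallP => l; apply/implyP => lT.
  move/forallP: HT's => /(_ l) /implyP /(_ lT); rewrite /lit_sat /flip ffunE.
  case: (l.1 =P j) => [E _|//]; exfalso; apply: (noj l.2); by rewrite -E -surjective_pairing.
apply: (noj (z j)); apply: Hun; by rewrite inE HT' HT'z.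
Qed.
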